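(* Let $\mathbb{F}$ be a field, $d\ge 1$, and $P_d=\mathbb{F}[x_1,\dots,x_d]$. For $k\ge 3$ let $D_k$ be the set of monomials of degree $k$ in $x_1,\dots,x_{k-1}$ not divisible by $x_{k-1}^2$ (if $d<k-1$, $D_k$ is the set of all monomials of degree $k$ in $x_1,\dots,x_d$), and let $K_d\subseteq P_d$ be the ideal generated by $x_1^3,\dots,x_d^3$ and $\bigcup_{k=3}^{d+1}D_k$. Let $\mu\in P_d$ be a monomial. (a) If $\mu\notin K_d$ and $\deg(\mu)\le d-1$, then there exists a monomial $\widetilde\mu\in P_d$ that is a multiple of $\mu$ of degree $d$, with $\widetilde\mu\notin K_d$, and such that $\widetilde\mu$ ends in $x_d$ or in $x_d^2$. (b) If $\mu\notin K_d$, $\deg(\mu)=d$, and $\mu$ does not end in $x_{d-1}^2$, then there exists a monomial $\widetilde\mu\in P_d$ that is a multiple of $\mu$ of degree $d+1$ with $\widetilde\mu\notin K_d$.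
   Context: A monomial $m$ is said to end in $x_j^{e}$ if $m=x_1^{a_1}\cdots x_{j-1}^{a_{j-1}}x_j^{e}$, i.e. $m$ involves no variable $x_i$ with $i>j$ and the exponent of $x_j$ in $m$ is $e$. *)

(* Defs.v *)
From HB Require Import structures.
From mathcomp Require Import all_boot all_order all_algebra.
From mathcomp Require Import mpoly.
Set Implicit Arguments. Unset Strict Implicit. Unset Printing Implicit Defensive.
Import GRing.Theory.
Local Open Scope ring_scope.

(* Variables x_1, ..., x_d are indexed by i : 'I_d, with x_{i+1} <-> i.
   A monomial of P_d = F[x_1..x_d] is 'X_[m] for an exponent vector m. *)

Definition in_ideal (R : comRingType) (S : R -> Prop) (p : R) : Prop :=
  exists s : seq (R * R),
    (forall cg, cg \in s -> S cg.2) /\ p = \sum_(cg <- s) cg.1 * cg.2.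

(* D_k : monomials of degree k in x_1..x_{k-1} (exponent 0 for x_j, j >= k,
   i.e. indices i with k-1 <= i) not divisible by x_{k-1}^2 (index k-2). *)
Definition inD (d k : nat) (m : 'X_{1..d}) : Prop :=
  [/\ mdeg m = k,
      (forall i : 'I_d, (k.-1 <= i)%N -> m i = 0%N)
    & (forall i : 'I_d, (i.+2 = k)%N -> (m i < 2)%N)].

Definition Kgen_mon (d : nat) (m : 'X_{1..d}) : Prop :=
  (exists i : 'I_d, m = (U_(i) *+ 3)%MM)
  \/ (exists k : nat, [/\ (3 <= k)%N, (k <= d.+1)%N & inD k m]).

Definition Kgen (F : fieldType) (d : nat) (p : {mpoly F[d]}) : Prop :=
  exists m : 'X_{1..d}, Kgen_mon m /\ p = 'X_[m].

Definition K_d (F : fieldType) (d : nat) (p : {mpoly F[d]}) : Prop :=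
  in_ideal (@Kgen F d) p.

(* m ends in x_j^e (j 1-based): no x_i with i > j, and exponent of x_j is e. *)
Definition ends_in (d : nat) (m : 'X_{1..d}) (j e : nat) : Prop :=
  (forall i : 'I_d, (j <= i)%N -> m i = 0%N) /\
  (forall i : 'I_d, i.+1 = j -> m i = e).

(* Main.v *)
Require Import Defs.
From HB Require Import structures.
From mathcomp Require Import all_boot all_order all_algebra.
From mathcomp Require Import mpoly.
From mathcomp Require Import zify.
Import GRing.Theory.
Local Open Scope ring_scope.
Section Helpers.
Set Implicit Arguments. Unset Strict Implicit.


Definition good {d} (m : 'X_{1..d}) := forall g, Kgen_mon g -> ~~ (g <= m)%MM.

Lemma notK_good (F : fieldType) d (m : 'X_{1..d}) : ~ K_d (F:=F) 'X_[m] -> good m.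
Proof.
move=> hK g hg; apply/negP => le; apply: hK.
exists [:: ('X_[m - g], 'X_[g])]; split.
  by move=> cg; rewrite mem_seq1 => /eqP -> /=; exists g.
by rewrite big_seq1 /= -mpolyXD submK.
Qed.

Lemma good_notK (F : fieldType) d (m : 'X_{1..d}) : good m -> ~ K_d (F:=F) 'X_[m].
Proof.
move=> gm [s [hs e]].
have := congr1 (mcoeff m) e; rewrite mcoeffX eqxx raddf_sum /=.
rewrite big1_seq ?oner_eq0 //; first by move/eqP; rewrite oner_eq0.
move=> [c x] /hs /= [g [kg ->]].
apply: memN_msupp_eq0; apply/negP.
rewrite (perm_mem (msuppMX c g)) => /mapP [m' _ em].
by move: (gm g kg); rewrite em lem_addr.
Qed.

Lemma good_le2 d (m : 'X_{1..d}) : good m -> forall i, (m i <= 2)%N.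
Proof.
move=> gm i; rewrite leqNgt; apply/negP => h.
have := gm (U_(i) *+ 3)%MM (or_introl (ex_intro _ i erefl)).
move/negP; apply; apply/mnm_lepP => j.
rewrite mulmnE mnm1E; case: eqP => [<-|] //=.
Qed.

Lemma sum_ge c d : (\sum_(i < d) (c <= i : nat))%N = (d - c)%N.
Proof.
elim: d => [|d IH]; first by rewrite big_ord0.
rewrite big_ord_recr /= IH; case: leqP => h; lia.
Qed.


Lemma exists_p d (m : 'X_{1..d}) : good m -> (mdeg m < 2 * d)%N ->
  exists p : 'I_d, (m p < 2)%N /\ forall i : 'I_d, (p < i)%N -> m i = 2%N.
Proof.
move=> gm hdeg.
have [i0 hi0] : exists i, (m i < 2)%N.
  apply/existsP; rewrite -[X in is_true X]negbK negb_exists; apply/negP => /forallP h.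
  move: hdeg; rewrite mdegE ltnNge => /negP; apply.
  rewrite mulnC -[X in (X * _ <= _)%N]card_ord -sum_nat_const.
  by apply: leq_sum => i _; move: (h i); rewrite -leqNgt.
case: (@arg_maxnP _ i0 (fun i => m i < 2)%N (fun i => nat_of_ord i) hi0) => p hp hmax.
exists p; split => // i hi.
have := good_le2 gm i; case: (ltnP (m i) 2) => h; last lia.
have := hmax i h; rewrite /geq /=; lia.
Qed.

Lemma step d (m : 'X_{1..d}) (p : 'I_d) : good m -> (m p < 2)%N ->
  (forall i : 'I_d, (p < i)%N -> m i = 2%N) -> (mdeg m <= d)%N ->
  (mdeg m = d -> forall i : 'I_d, i.+1 = d -> (1 <= m i)%N) ->
  good (m + U_(p))%MM.
Proof.
move=> gm mp hp hdeg hb.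
have le2 := good_le2 gm.
have eE : forall j, (m + U_(p))%MM j = (m j + (p == j))%N.
  by move=> j; rewrite mnmDE mnm1E.
have e2 : forall j, ((m + U_(p))%MM j <= 2)%N.
  by move=> j; rewrite eE; case: eqP => [<-|_]; [lia | have := le2 j; lia].
move=> g [[i ->]|[k [k3 kd [gdeg gz g2]]]]; apply/negP => /mnm_lepP le.
  by have := le i; have := e2 i; rewrite mulmnE mnm1E eqxx; lia.
case: (leqP k.-1 p) => hkp.
  move: (gm g (or_intror (ex_intro _ k (And3 k3 kd (And3 gdeg gz g2))))).
  move/negP; apply; apply/mnm_lepP => j.
  case: (eqVneq p j) => [<-|ne]; first by rewrite gz.
  by have := le j; rewrite eE (negbTE ne) addn0.
pose b (j : 'I_d) := ((j.+2 == k) && ((m + U_(p))%MM j == 2%N)) : nat.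
have pw : forall j : 'I_d, (g j + 2 * (k.-1 <= j) + b j <= (m + U_(p))%MM j)%N.
  move=> j; rewrite /b.
  case: (leqP k.-1 j) => hkj.
    have pj : (p < j)%N by lia.
    have pjf : (p == j) = false.
      by apply/eqP => e; move: pj; rewrite e ltnn.
    have jk : (j.+2 == k) = false by apply/eqP; lia.
    by rewrite gz // eE pjf addn0 (hp j pj) jk.
  have := le j; have := e2 j.
  rewrite muln0 addn0.
  case: eqP => [hj|_] /=; first last.
    by rewrite addn0.
  have := g2 j hj; case: eqP => /= [->|_]; rewrite ?addn0 ?addn1; lia.
have hs : (\sum_(j < d) (g j + 2 * (k.-1 <= j) + b j) <= \sum_(j < d) (m + U_(p))%MM j)%N.
  by apply: leq_sum => j _; exact: pw j.
have h2 : (\sum_(j < d) 2 * (k.-1 <= j) = 2 * (d - k.-1))%N.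
  by rewrite -sum_ge big_distrr.
rewrite -mdegE mdegD mdeg1 !big_split /= -mdegE gdeg sum_ge big1_eq in hs.
have {}hs : (k + (d - k.-1 + (d - k.-1 + 0)) + \sum_(j < d) b j <= mdeg m + 1)%N := hs.
have : (0 < \sum_(j < d) b j)%N \/ (mdeg m < d)%N.
  case: (ltnP (mdeg m) d) => hd; [by right | left].
  have hmd : mdeg m = d by lia.
  have d0 : (d.-1 < d)%N by lia.
  pose j0 := Ordinal d0.
  rewrite (bigD1 j0) //= /b /=.
  have -> : (d.-1).+2 == k.
    apply/eqP; case: (ltnP k d.+1) => hk; last lia.
    exfalso; lia.
  rewrite eE.
  have hj0 := hb hmd j0 (ltn_predK d0).
  case: (eqVneq p j0) => [pj|pj] /=.
    rewrite -pj in hj0 *.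
    have -> : (m p + true == 2)%N by rewrite addn1; apply/eqP; lia.
    by [].
  have pjn : nat_of_ord p <> nat_of_ord j0.
    by move=> h; move/eqP: pj; apply; apply: val_inj.
  rewrite addn0 hp /=; first by [].
  have := ltn_ord p; rewrite /j0 /= in pjn *; lia.
case.
  move=> hb0.
  case: (ltnP (mdeg m) d) => hd; lia.
lia.
Qed.

Lemma fill d n (m : 'X_{1..d}) : good m -> (mdeg m + n = d)%N ->
  exists mt : 'X_{1..d}, [/\ (m <= mt)%MM, mdeg mt = d & good mt].
Proof.
elim: n m => [|n IH] m gm hdeg.
  by exists m; split => //; [exact: lepm_refl | lia].
have [p [mp hp]] := exists_p gm (ltac:(lia) : (mdeg m < 2 * d)%N).
have g1 := step gm mp hp (ltac:(lia) : (mdeg m <= d)%N) ltac:(move=> e; exfalso; lia).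
have [mt [le1 dmt gmt]] := IH _ g1 ltac:(rewrite mdegD mdeg1; lia).
exists mt; split => //.
exact: (lepm_trans (lem_addr m U_(p)) le1).
Qed.

End Helpers.

Theorem mainTheorem11 (F : fieldType) (d : nat) (hd : (1 <= d)%N)
    (m : 'X_{1..d}) (hm : ~ K_d (F:=F) 'X_[m]) :
  ((mdeg m <= d.-1)%N ->
     exists mt : 'X_{1..d},
       [/\ exists q : {mpoly F[d]}, 'X_[mt] = q * 'X_[m],
           mdeg mt = d,
           ~ K_d (F:=F) 'X_[mt]
         & ends_in mt d 1 \/ ends_in mt d 2])
  /\
  (mdeg m = d -> ~ ends_in m d.-1 2 ->
     exists mt : 'X_{1..d},
       [/\ exists q : {mpoly F[d]}, 'X_[mt] = q * 'X_[m],
           mdeg mt = d.+1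
         & ~ K_d (F:=F) 'X_[mt]]).
Proof.
have gm := notK_good hm.
have le2 := good_le2 gm.
have d0 : (d.-1 < d)%N by lia.
pose j0 := Ordinal d0.
have ij0 : forall i : 'I_d, (d.-1 <= i)%N -> i = j0.
  by move=> i hi; apply: val_inj => /=; have := ltn_ord i; lia.
split.
  move=> hdeg.
  have [p [mp hp]] := exists_p gm (ltac:(lia) : (mdeg m < 2 * d)%N).
  have g1 := step gm mp hp (ltac:(lia) : (mdeg m <= d)%N) ltac:(move=> e; exfalso; lia).
  have [mt [le1 dmt gmt]] := fill (n:=(d - mdeg (m + U_(p))%MM)%N) g1 ltac:(rewrite mdegD mdeg1; lia).
  have lem : (m <= mt)%MM := lepm_trans (lem_addr m U_(p)) le1.
  have h1 : (1 <= mt j0)%N.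
    apply: leq_trans (mnm_lepP le1 j0); rewrite mnmDE mnm1E.
    case: (eqVneq p j0) => [_|pj]; first by rewrite addn1.
    rewrite addn0.
    rewrite hp //.
    have pjn : nat_of_ord p <> nat_of_ord j0.
      by move=> h; move/eqP: pj; apply; apply: val_inj.
    have := ltn_ord p; rewrite /j0 /= in pjn *; lia.
  have h2 := good_le2 gmt j0.
  have ends : forall e, mt j0 = e -> ends_in mt d e.
    move=> e he; split => i hi; first by have := ltn_ord i; lia.
    by rewrite (ij0 i) //; lia.
  exists mt; split => //.
  - by exists 'X_[mt - m]; rewrite -mpolyXD submK.
  - exact: good_notK.
  - case: (ltnP (mt j0) 2) => h3; [left | right]; apply: ends; lia.
move=> hdeg hne.
have hj0 : (1 <= m j0)%N.
  case: (posnP (m j0)) => // h0; exfalso.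
  have first : forall i : 'I_d, (d.-1 <= i)%N -> m i = 0%N.
    by move=> i hi; rewrite (ij0 i hi).
  have [i [hi1 hi2]] : exists i : 'I_d, i.+1 = d.-1 /\ (m i < 2)%N.
    case: (boolP [exists i : 'I_d, (i.+1 == d.-1) && (m i != 2%N)]).
      move=> /existsP [i /andP [/eqP e1 e2]]; exists i; split => //.
      by have := le2 i; move: e2; case: (m i) => [|[|[|]]].
    move=> /existsPn hn; exfalso; apply: hne; split => // i hi.
    by have := hn i; rewrite hi eqxx /= negbK => /eqP.
  case: (ltnP 2 d) => d3.
    have kg : Kgen_mon m.
      right; exists d; split => //.
      split => // i' hi'.
      by have -> : i' = i by apply: val_inj => /=; lia.
    by have := gm m kg; rewrite lepm_refl.
  have pw : forall j : 'I_d, (m j <= (j == i))%N.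
    move=> j; case: (eqVneq j i) => [->|ne] /=; first by lia.
    have jn : nat_of_ord j <> nat_of_ord i.
      by move=> h; move/eqP: ne; apply; apply: val_inj.
    rewrite (ij0 j) ?h0 //; have := ltn_ord j; lia.
  have : (mdeg m <= \sum_(j < d) (j == i : nat))%N.
    by rewrite mdegE; apply: leq_sum => j _; exact: pw.
  rewrite (bigD1 i) //= big1 => [|j /negbTE -> //].
  rewrite eqxx; lia.
have [p [mp hp]] := exists_p gm (ltac:(lia) : (mdeg m < 2 * d)%N).
have g1 := step gm mp hp (ltac:(lia) : (mdeg m <= d)%N)
  (fun _ i hi => ltac:(rewrite (ij0 i) //; lia)).
exists (m + U_(p))%MM; split.
- by exists 'X_[U_(p)]; rewrite addmC mpolyXD.
- by rewrite mdegD mdeg1 hdeg addn1.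
- exact: good_notK.
Qed.
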